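(* Let $d$ be even, let $n>2d$ be prime, let $\omega=e^{2\pi i/n}$, let $T$ be a $d\times d$ Cauchy matrix over $\mathbb{F}_n$, and let $(W_T)_{(i_1,\dots,i_d),(j_1,\dots,j_d)}=\omega^{(i_1,\dots,i_d)\,T\,(j_1,\dots,j_d)^\top}$. For every $\lambda\subseteq[d]$, the $n^{2|\lambda|}\times n^{2(d-|\lambda|)}$ matrix $W_T^{[\lambda]}$ defined by $(W_T^{[\lambda]})_{(i_\lambda,j_\lambda),(i_{\lambda^c},j_{\lambda^c})}=(W_T)_{(i_1,\dots,i_d),(j_1,\dots,j_d)}$ (where $\lambda^c=[d]\setminus\lambda$ and $i_\lambda$ denotes the subtuple of coordinates in $\lambda$) satisfies $\mathrm{rank}(W_T^{[\lambda]})=n^{2\min\{|\lambda|,\,d-|\lambda|\}}$.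
   Context: A Cauchy matrix over $\mathbb{F}_n$ is $T_{ab}=1/(x_a-y_b)$ for pairwise distinct $x_1,\dots,x_d,y_1,\dots,y_d\in\mathbb{F}_n$; every square submatrix of it is nonsingular. Indices in $[n]$ are regarded as elements of $\mathbb{F}_n$ and the exponent is computed in $\mathbb{F}_n$. *)

(* Defs.v *)
From HB Require Import structures.
From mathcomp Require Import all_boot all_order all_algebra all_field.
Set Implicit Arguments. Unset Strict Implicit. Unset Printing Implicit Defensive.
Import Order.TTheory GRing.Theory Num.Theory.
Local Open Scope ring_scope.

(* omega = e^{2 pi i / n} in algC: n.-root (-1) is the n-th root of -1 with
   minimal nonnegative argument, i.e. e^{i pi / n}; its square is e^{2 pi i/n}. *)
Definition omega (n : nat) : algC := (n.-root (-1)) ^+ 2.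

Definition is_cauchy (F : fieldType) (d : nat) (T : 'M[F]_d) : Prop :=
  exists (x y : 'I_d -> F),
    [/\ injective x, injective y, (forall a b, x a != y b)
      & forall a b, T a b = (x a - y b)^-1].

Definition bform (F : fieldType) (d : nat) (T : 'M[F]_d) (i j : 'I_d -> F) : F :=
  \sum_(a < d) \sum_(b < d) i a * T a b * j b.

Definition W_entry (n d : nat) (T : 'M['F_n]_d) (i j : 'I_d -> 'F_n) : algC :=
  omega n ^+ (nat_of_ord (bform T i j)).

Notation sub_lam lam := {k : _ | k \in lam}.
Notation sub_lamc lam := {k : _ | k \in ~: lam}.

Definition glue (F : Type) (d : nat) (lam : {set 'I_d})
    (a : {ffun sub_lam lam -> F}) (b : {ffun sub_lamc lam -> F}) (k : 'I_d) : F :=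
  match @idP (k \in lam) with
  | ReflectT h => a (exist _ k h)
  | ReflectF h => b (exist _ k (introT setCP h))
  end.

Definition frank (R : fieldType) (I J : finType) (M : I -> J -> R) : nat :=
  \rank (\matrix_(r < #|I|, c < #|J|) M (enum_val r) (enum_val c)).

Definition W_flat (n d : nat) (T : 'M['F_n]_d) (lam : {set 'I_d})
    (r : {ffun sub_lam lam -> 'F_n} * {ffun sub_lam lam -> 'F_n})
    (c : {ffun sub_lamc lam -> 'F_n} * {ffun sub_lamc lam -> 'F_n}) : algC :=
  W_entry T (glue r.1 c.1) (glue r.2 c.2).

(* Main.v *)
Require Import Defs.
From HB Require Import structures.
From mathcomp Require Import all_boot all_order all_algebra all_field.
Set Implicit Arguments. Unset Strict Implicit. Unset Printing Implicit Defensive.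
Import Order.TTheory GRing.Theory Num.Theory.
Local Open Scope ring_scope.



Lemma all_negroots n (y : algC) : (0 < n)%N -> y ^+ n = -1 -> n.-root (-1 : algC) = -1 -> y = -1.
Proof.
move=> n0 yn z1.
have key : forall y : algC, y ^+ n = -1 -> 0 <= 'Im y -> y = -1.
  move=> x xn xI.
  have := rootC_Re_max n0 xn xI; rewrite z1 => hRe.
  have nx : `|x| = 1.
    apply/eqP; rewrite -(@pexpr_eq1 _ _ n) // -normrX xn normrN normr1 //.
  have hRe2 : - 1 <= 'Re x.
    have := leif_Re_Creal (- x); rewrite normrN nx => [[h _]].
    by rewrite lerNl -raddfN.
  have r1 : (-1 : algC) \is Num.real by rewrite rpredN rpred1.
  have eRe : 'Re x = 'Re (-1 : algC).
    by rewrite (Creal_ReP _ r1) in hRe *; apply/eqP; rewrite eq_le hRe hRe2.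
  apply: eqC_semipolar => //; first by rewrite nx normrN normr1.
  by rewrite (Creal_ImP _ r1) mulr0.
have [/ltW|hI] := real_ltP (Creal_Im y) (real0 _).
  move=> hI.
  have : y^* = -1.
    apply: key; first by rewrite -rmorphXn yn rmorphN rmorph1.
    by rewrite Im_conj oppr_ge0.
  by move/(congr1 Num.conj_op); rewrite conjCK rmorphN rmorph1.
exact: key.
Qed.

Lemma omega_n n : (0 < n)%N -> omega n ^+ n = 1.
Proof.
move=> n0; rewrite /omega -exprM mulnC exprM rootCK //.
by rewrite expr2 mulrNN mulr1.
Qed.

Lemma omega_neq1 n : prime n -> omega n != 1.
Proof.
move=> pn; have n0 := prime_gt0 pn.
rewrite /omega sqrf_eq1; apply/negP => /orP [/eqP z1 | /eqP z1].
  have := @rootCK algC n n0 (-1); rewrite z1 expr1n => /eqP.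
  by rewrite -subr_eq0 opprK -(natrD _ 1 1) pnatr_eq0.
have [z pz] := C_prim_root_exists n0.
have : (- z) ^+ n = -1.
  rewrite exprNn (prim_expr_order pz) mulr1.
  have := @rootCK algC n n0 (-1); rewrite z1 => ->. done.
move/(all_negroots n0)/(_ z1)/eqP; rewrite eqr_opp => /eqP ez.
have := prim_order_dvd pz 1; rewrite expr1 ez eqxx dvdn1 => /eqP n1.
by rewrite n1 in pn.
Qed.

Definition chi n (z : 'F_n) : algC := omega n ^+ (nat_of_ord z).

Lemma omega_N n : prime n -> omega n ^+ (Zp_trunc (pdiv n)).+2 = 1.
Proof. by move=> pn; rewrite Fp_cast // omega_n // prime_gt0. Qed.

Lemma chiD n (a b : 'F_n) : prime n -> chi (a + b) = chi a * chi b.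
Proof.
move=> pn; rewrite /chi -exprD -[RHS](expr_mod _ (omega_N pn)).
by [].
Qed.

Lemma chi_neq0 n (a : 'F_n) : prime n -> chi a != 0.
Proof.
move=> pn; rewrite /chi expf_neq0 //; apply/negP => /eqP h.
have := omega_n (prime_gt0 pn); rewrite h expr0n gtn_eqF ?prime_gt0 //= => /eqP.
by rewrite eq_sym oner_eq0.
Qed.

Lemma chi_neq1 n (e : 'F_n) : prime n -> e != 0 -> chi e != 1.
Proof.
move=> pn e0; rewrite /chi.
have [m pm mn] := prim_order_exists (prime_gt0 pn) (omega_n (prime_gt0 pn)).
rewrite -(prim_order_dvd pm).
have en : (nat_of_ord e < n)%N.
  have H : forall x, (x < (Zp_trunc (pdiv n)).+2)%N -> (x < n)%N by move=> x; rewrite Fp_cast.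
  exact: H (ltn_ord e).
have e0' : (0 < nat_of_ord e)%N by rewrite lt0n; apply: contra e0 => /eqP h; apply/eqP/val_inj.
have := pn; case/primeP => _ /(_ m mn) /orP [/eqP m1|/eqP mn'].
  have := prim_order_dvd pm 1; rewrite m1 dvd1n expr1 => /esym/eqP o1.
  by have := omega_neq1 pn; rewrite o1 eqxx.
rewrite mn'; apply/negP => /dvdn_leq => /(_ e0'); rewrite leqNgt en.
by [].
Qed.

Lemma frank_rows (I J : finType) (M : I -> J -> algC) :
  (forall c : I -> algC, (forall j, \sum_i c i * M i j = 0) -> forall i, c i = 0) ->
  frank M = #|I|.
Proof.
move=> H; apply/eqP; rewrite /frank; set A := \matrix_(_, _) _.
change (row_free A); apply: inj_row_free => v vA.
apply/rowP => k; rewrite mxE.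
have := H (fun i => v 0 (enum_rank i)) _ (enum_val k); rewrite enum_valK; apply.
move=> j; move/matrixP: vA => /(_ 0 (enum_rank j)); rewrite !mxE => h; rewrite -[RHS]h.
rewrite [RHS](reindex (@enum_rank I)) /=; last by apply: onW_bij; exact: enum_rank_bij.
by apply: eq_bigr => i _; rewrite /A mxE !enum_rankK.
Qed.

Lemma frank_tr (I J : finType) (M : I -> J -> algC) :
  frank (fun j i => M i j) = frank M.
Proof.
by rewrite /frank -mxrank_tr; congr (\rank _); apply/matrixP => r c; rewrite !mxE.
Qed.

Lemma frank_leI (I J : finType) (M : I -> J -> algC) : (frank M <= #|I|)%N.
Proof. exact: rank_leq_row. Qed.

Lemma frank_leJ (I J : finType) (M : I -> J -> algC) : (frank M <= #|J|)%N.
Proof. exact: rank_leq_col. Qed.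

Lemma chi0 n : chi (0 : 'F_n) = 1.
Proof. by rewrite /chi expr0. Qed.


Lemma rows_indep n (R C : finType) (f : R -> C -> 'F_n) (c0 : C) : prime n ->
  (forall r r0, r != r0 -> exists s : C -> C, injective s /\ exists e : 'F_n,
     e != 0 /\ forall col, f r (s col) - f r0 (s col) = f r col - f r0 col + e) ->
  frank (fun r col => chi (f r col)) = #|R|.
Proof.
move=> pn H; apply: frank_rows => c Hc r0.
have S0 : forall r, r != r0 -> \sum_col chi (f r col - f r0 col) = 0.
  move=> r /H [s [si [e [e0 He]]]].
  set S := \sum_col _.
  have : S = chi e * S.
    rewrite {1}/S (reindex_inj si) mulr_sumr; apply: eq_bigr => col _.
    by rewrite He chiD // mulrC.
  move/eqP; rewrite -{1}[S]mul1r -subr_eq0 -mulrBl mulf_eq0 subr_eq0 eq_sym.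
  by rewrite (negbTE (chi_neq1 pn e0)) => /eqP.
have : \sum_col chi (- f r0 col) * \sum_r c r * chi (f r col) = 0.
  by apply: big1 => col _; rewrite Hc mulr0.
under eq_bigr do rewrite mulr_sumr.
rewrite exchange_big (bigD1 r0) //= [X in _ + X]big1 ?addr0; last first.
  move=> r rr0.
  apply: etrans (_ : c r * \sum_col chi (f r col - f r0 col) = _); last by rewrite S0 // mulr0.
  rewrite mulr_sumr; apply: eq_bigr => col _.
  by rewrite mulrCA -chiD // addrC.
under eq_bigr do rewrite mulrCA -chiD // addNr chi0 mulr1.
rewrite sumr_const => /eqP; rewrite mulrn_eq0 orbC => /orP [/eqP //|].
have cC : (0 < #|C|)%N by apply/card_gt0P; exists c0.
by move=> h; move: cC; rewrite lt0n h.
Qed.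

From mathcomp Require Import zify ring.

Lemma card_D1_lt (d : nat) (P : {set 'I_d}) a : a \in P ->
  (#|[pred a' | (a' \in P) && (a' != a)]| < #|P|)%N.
Proof.
move=> aP; rewrite (cardD1 a P) aP add1n ltnS.
by apply: subset_leq_card; apply/subsetP => x; rewrite !inE andbC.
Qed.

Lemma cauchy_indep (F : fieldType) d (X Y : 'I_d -> F) (P Q : {set 'I_d}) (w : 'I_d -> F) :
  injective X -> injective Y -> (forall a b, X a != Y b) -> (#|P| <= #|Q|)%N ->
  (forall a, a \notin P -> w a = 0) ->
  (forall b, b \in Q -> \sum_a w a / (X a - Y b) = 0) -> forall a, w a = 0.
Proof.
move=> Xi Yi XY PQ wP wQ a0.
have [a0P|] := boolP (a0 \in P); last exact: wP.
pose pa a := \prod_(a' in P | a' != a) ('X - (X a')%:P).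
pose p := \sum_(a in P) w a *: pa a.
have p0 : p = 0.
  apply/eqP; apply: contraT => pn0.
  have := max_poly_roots pn0 (rs := [seq Y b | b <- enum Q]).
  rewrite map_inj_uniq // enum_uniq size_map -cardE => /(_ _ isT).
  have -> : all (root p) [seq Y b | b <- enum Q].
    apply/allP => _ /mapP [b bQ ->]; rewrite mem_enum in bQ.
    have hb := wQ b bQ.
    rewrite (bigID (fun a => a \in P)) /= [X in _ + X]big1 ?addr0 in hb; last first.
      by move=> a /wP ->; rewrite mul0r.
    apply/eqP; rewrite /p horner_sum.
    set Pi := \prod_(a' in P) (Y b - X a').
    have : Pi * \sum_(a in P) w a / (X a - Y b) = 0 by rewrite hb mulr0.
    rewrite mulr_sumr => h; rewrite -[RHS]oppr0 -[in RHS]h -sumrN; apply: eq_bigr => a aP.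
    rewrite hornerZ /pa horner_prod /Pi [in RHS](bigD1 a) //=.
    rewrite (eq_bigr (fun i => Y b - X i)); last by move=> i _; rewrite hornerXsubC.
    have : X a - Y b != 0 by rewrite subr_eq0.
    move=> nz; field => //.
  move=> /(_ isT) Hs; suff: (size p <= #|Q|)%N by rewrite leqNgt Hs.
  apply: leq_trans _ PQ.
  apply: leq_trans (size_sum _ _ _) _; apply/bigmax_leqP => a aP.
  apply: leq_trans (size_scale_leq _ _) _.
  rewrite /pa size_prod; last by move=> i _; rewrite polyXsubC_eq0.
  under eq_bigr do rewrite size_XsubC.
  rewrite sum_nat_const (_ : 2%R = 2%N) //.
  have -> : #|(fun i : 'I_d => (i \in P) && (i != a))| = #|[pred a' in P | a' != a]| by apply: eq_card.
  have := card_D1_lt aP; lia.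
have := congr1 (fun q => q.[X a0]) p0; rewrite /= horner0 /p horner_sum (bigD1 a0) //=.
rewrite big1 ?addr0; last first.
  move=> a /andP [aP aa0]; rewrite hornerZ /pa horner_prod (bigD1 a0) /=; last by rewrite a0P eq_sym.
  by rewrite hornerXsubC subrr mul0r mulr0.
rewrite hornerZ => /eqP; rewrite mulf_eq0 => /orP [/eqP //|].
have nz : (pa a0).[X a0] != 0.
  rewrite /pa horner_prod; apply/prodf_neq0 => a' /andP [_ aa]; rewrite hornerXsubC subr_eq0.
  by apply: contra aa => /eqP /Xi ->.
by rewrite (negbTE nz).
Qed.

Section Glue.
Variables (F : zmodType) (d : nat) (lam : {set 'I_d}).
Implicit Types (a u : {ffun sub_lam lam -> F}) (b x : {ffun sub_lamc lam -> F}).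

Lemma glue_in a b (k : sub_lam lam) : glue a b (val k) = a k.
Proof.
case: k => k kl /=; rewrite /glue.
match goal with |- context [@idP ?bb] => destruct (@idP bb) as [h|h] end; last by case: (h kl).
by rewrite (bool_irrelevance h kl).
Qed.

Lemma glue_out a b (k : sub_lamc lam) : glue a b (val k) = b k.
Proof.
case: k => k kl /=; rewrite /glue.
match goal with |- context [@idP ?bb] => destruct (@idP bb) as [h|h] end; first by have /setCP /(_ h) := kl.
by rewrite (bool_irrelevance (introT setCP h) kl).
Qed.

Ltac gl := rewrite /glue; match goal with |- context [@idP ?bb] => destruct (@idP bb) as [h|h] end; rewrite ?ffunE.

Lemma glue_addr u x x' i :
  glue u [ffun k => x k + x' k] i = glue u x i + glue [ffun => 0] x' i.
Proof. by gl; rewrite ?addr0 ?add0r. Qed.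

Lemma glue_addl u u' x i :
  glue [ffun k => u k + u' k] x i = glue u x i + glue u' [ffun => 0] i.
Proof. by gl; rewrite ?addr0 ?add0r. Qed.

Lemma glue_subl u u' x i :
  glue u x i - glue u' x i = glue [ffun k => u k - u' k] [ffun => 0] i.
Proof. by gl; rewrite ?subrr. Qed.

Lemma glue_subr u x x' i :
  glue u x i - glue u x' i = glue [ffun => 0] [ffun k => x k - x' k] i.
Proof. by gl; rewrite ?subrr. Qed.

Lemma glue00 i : glue (lam := lam) [ffun => 0 : F] [ffun => 0 : F] i = 0.
Proof. by gl. Qed.

Lemma glue0r u i : i \notin lam -> glue u [ffun => 0] i = 0.
Proof. by gl => // /negP. Qed.

Lemma glue0l x i : i \in lam -> glue [ffun => 0] x i = 0.
Proof. by gl => //. Qed.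

End Glue.

Section Glue2.
Variables (F : pzRingType) (d : nat) (lam : {set 'I_d}).

Lemma glue_indr (b : 'I_d) i : b \in ~: lam ->
  glue [ffun => 0 : F] [ffun k : sub_lamc lam => ((val k == b)%:R : F)] i = (i == b)%:R.
Proof.
move=> bl; rewrite /glue; match goal with |- context [@idP ?bb] => destruct (@idP bb) as [h|h] end; rewrite ?ffunE //=.
by case: eqP => // eib; move: bl; rewrite -eib inE h.
Qed.

Lemma glue_indl (b : 'I_d) i : b \in lam ->
  glue [ffun k : sub_lam lam => ((val k == b)%:R : F)] [ffun => 0 : F] i = (i == b)%:R.
Proof.
move=> bl; rewrite /glue; match goal with |- context [@idP ?bb] => destruct (@idP bb) as [h|h] end; rewrite ?ffunE //=.
by case: eqP => // eib; move: h; rewrite eib bl.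
Qed.
End Glue2.

Section Bform.
Variables (F : fieldType) (d : nat) (T : 'M[F]_d).

Lemma bform_ext p p' q q' : (forall k, p k = p' k) -> (forall k, q k = q' k) ->
  bform T p q = bform T p' q'.
Proof.
move=> hp hq; apply: eq_bigr => a _; apply: eq_bigr => b _; by rewrite hp hq.
Qed.

Lemma bform_shift p p0 s q q0 t :
  bform T (fun k => p k + s k) (fun k => q k + t k)
  - bform T (fun k => p0 k + s k) (fun k => q0 k + t k)
  = bform T p q - bform T p0 q0
    + (bform T (fun k => p k - p0 k) t + bform T s (fun k => q k - q0 k)).
Proof.
rewrite /bform -!sumrB -!big_split /=; apply: eq_bigr => a _.
rewrite -!sumrB -!big_split /=; apply: eq_bigr => b _.
ring.
Qed.

Lemma bform0l p q : (forall k, p k = 0) -> bform T p q = 0.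
Proof.
move=> hp; apply: big1 => a _; apply: big1 => b _; by rewrite hp !mul0r.
Qed.

Lemma bform_indr p b : bform T p (fun k => (k == b)%:R) = \sum_a p a * T a b.
Proof.
apply: eq_bigr => a _; rewrite (bigD1 b) //= eqxx mulr1 big1 ?addr0 //.
by move=> b' nb; rewrite (negbTE nb) mulr0.
Qed.

Lemma bform_indl q a : bform T (fun k => (k == a)%:R) q = \sum_b T a b * q b.
Proof.
rewrite /bform (bigD1 a) //= [X in _ + X]big1 ?addr0; last first.
  by move=> a' na; apply: big1 => b _; rewrite (negbTE na) !mul0r.
by apply: eq_bigr => b _; rewrite eqxx mul1r.
Qed.

Lemma cauchy_row (P Q : {set 'I_d}) (w : 'I_d -> F) a0 : is_cauchy T ->
  (#|P| <= #|Q|)%N -> (forall a, a \notin P -> w a = 0) -> w a0 != 0 ->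
  exists b, b \in Q /\ \sum_a w a * T a b != 0.
Proof.
move=> [x [y [xi yi xy Te]]] PQ wP wa0.
have [b /andP [bQ nz]|none] := pickP [pred b | (b \in Q) && (\sum_a w a * T a b != 0)].
  by exists b.
have := @cauchy_indep F d x y P Q w xi yi xy PQ wP.
move=> /(_ _ a0) => h; move: wa0; rewrite h ?eqxx // => b bQ.
have := none b; rewrite /= bQ /= => /negbFE /eqP h0; rewrite -[RHS]h0.
by apply: eq_bigr => a _; rewrite Te.
Qed.

Lemma cauchy_col (P Q : {set 'I_d}) (w : 'I_d -> F) a0 : is_cauchy T ->
  (#|P| <= #|Q|)%N -> (forall a, a \notin P -> w a = 0) -> w a0 != 0 ->
  exists a, a \in Q /\ \sum_b T a b * w b != 0.
Proof.
move=> [x [y [xi yi xy Te]]] PQ wP wa0.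
have [a /andP [aQ nz]|none] := pickP [pred a | (a \in Q) && (\sum_b T a b * w b != 0)].
  by exists a.
have yx : forall a b, y a != x b by move=> a b; rewrite eq_sym.
have := @cauchy_indep F d y x P Q w yi xi yx PQ wP.
move=> /(_ _ a0) => h; move: wa0; rewrite h ?eqxx // => a aQ.
have := none a; rewrite /= aQ /= => /negbFE /eqP h0.
rewrite -[RHS]oppr0 -[in RHS]h0 -sumrN; apply: eq_bigr => b _.
by rewrite Te -opprB invrN mulrN mulrC.
Qed.

End Bform.

Lemma bform0r (F : fieldType) d (T : 'M[F]_d) p q : (forall k, q k = 0) -> bform T p q = 0.
Proof.
move=> hq; apply: big1 => a _; apply: big1 => b _; by rewrite hq !mulr0.
Qed.

Lemma shift_eq (F : fieldType) d (T : 'M[F]_d) (p p0 s q q0 t P P0 Q Q0 : 'I_d -> F) :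
  (forall k, P k = p k + s k) -> (forall k, P0 k = p0 k + s k) ->
  (forall k, Q k = q k + t k) -> (forall k, Q0 k = q0 k + t k) ->
  bform T P Q - bform T P0 Q0 = bform T p q - bform T p0 q0
    + (bform T (fun k => p k - p0 k) t + bform T s (fun k => q k - q0 k)).
Proof.
move=> hP hP0 hQ hQ0; rewrite (bform_ext T hP hQ) (bform_ext T hP0 hQ0).
exact: bform_shift.
Qed.

Lemma ffun_neq (A : finType) (F : zmodType) (u u0 : {ffun A -> F}) :
  u != u0 -> exists k, u k - u0 k != 0.
Proof.
move=> ne; have : [exists k, u k - u0 k != 0].
  apply: contraR ne => /existsPn h; apply/eqP/ffunP => k; apply/eqP.
  by have := h k; rewrite negbK subr_eq0.
by case/existsP => k; exists k.
Qed.

Lemma case_rows n d (T : 'M['F_n]_d) (lam : {set 'I_d}) :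
  prime n -> is_cauchy T -> (#|lam| <= #|~: lam|)%N ->
  frank (@W_flat n d T lam) =
  #|{: ({ffun sub_lam lam -> 'F_n} * {ffun sub_lam lam -> 'F_n})%type}|.
Proof.
move=> pn cT hl.
apply: (@rows_indep n _ _ (fun r c => bform T (glue r.1 c.1) (glue r.2 c.2))
          ([ffun => 0], [ffun => 0]) pn).
move=> [u v] [u0 v0] ne.
suff [dx [dy e0]] : exists dx dy : {ffun sub_lamc lam -> 'F_n},
    bform T (glue [ffun k => u k - u0 k] [ffun => 0]) (glue [ffun => 0] dy)
    + bform T (glue [ffun => 0] dx) (glue [ffun k => v k - v0 k] [ffun => 0]) != 0.
  exists (fun c : {ffun sub_lamc lam -> 'F_n} * {ffun sub_lamc lam -> 'F_n} => ([ffun k => c.1 k + dx k], [ffun k => c.2 k + dy k])); split.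
    move=> [x y] [x' y'] /= [/ffunP hx /ffunP hy]; congr (_, _); apply/ffunP => k.
      by have := hx k; rewrite !ffunE => /addIr.
    by have := hy k; rewrite !ffunE => /addIr.
  eexists; split; first exact: e0.
  move=> [x y] /=.
  rewrite (@shift_eq _ _ T (glue u x) (glue u0 x) (glue [ffun => 0] dx)
             (glue v y) (glue v0 y) (glue [ffun => 0] dy)); try by move=> k; rewrite glue_addr.
  congr (_ + (_ + _)); apply: bform_ext => k //; by rewrite glue_subl.
have [uu|nu] := eqVneq u u0.
  have nv : v != v0 by apply: contra ne => /eqP ->; rewrite uu.
  have [k vk] := ffun_neq nv.
  have wP : forall i, i \notin lam -> glue [ffun k => v k - v0 k] [ffun => 0] i = 0.
    by move=> i; apply: glue0r.
  have wk : glue [ffun k => v k - v0 k] [ffun => 0] (val k) != 0 by rewrite glue_in ffunE.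
  have [a [aQ nz]] := @cauchy_col _ _ T lam (~: lam) _ _ cT hl wP wk.
  exists [ffun k : sub_lamc lam => ((val k == a)%:R : 'F_n)], [ffun => 0].
  rewrite bform0r; last by move=> i; apply: glue00.
  rewrite add0r (@bform_ext _ _ T _ (fun i => (i == a)%:R) _ (glue [ffun k => v k - v0 k] [ffun => 0])) //.
    by rewrite bform_indl.
  by move=> i; rewrite glue_indr.
have [k uk] := ffun_neq nu.
have wP : forall i, i \notin lam -> glue [ffun k => u k - u0 k] [ffun => 0] i = 0.
  by move=> i; apply: glue0r.
have wk : glue [ffun k => u k - u0 k] [ffun => 0] (val k) != 0 by rewrite glue_in ffunE.
have [b [bQ nz]] := @cauchy_row _ _ T lam (~: lam) _ _ cT hl wP wk.
exists [ffun => 0], [ffun k : sub_lamc lam => ((val k == b)%:R : 'F_n)].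
rewrite [X in _ + X](bform0l T); last by move=> i; apply: glue00.
rewrite addr0 (@bform_ext _ _ T _ (glue [ffun k => u k - u0 k] [ffun => 0]) _ (fun i => (i == b)%:R)) //.
  by rewrite bform_indr.
by move=> i; rewrite glue_indr.
Qed.

Lemma case_cols n d (T : 'M['F_n]_d) (lam : {set 'I_d}) :
  prime n -> is_cauchy T -> (#|~: lam| <= #|lam|)%N ->
  frank (@W_flat n d T lam) =
  #|{: ({ffun sub_lamc lam -> 'F_n} * {ffun sub_lamc lam -> 'F_n})%type}|.
Proof.
move=> pn cT hl; rewrite -frank_tr.
apply: (@rows_indep n _ _ (fun c r => bform T (glue r.1 c.1) (glue r.2 c.2))
          ([ffun => 0], [ffun => 0]) pn).
move=> [x y] [x0 y0] ne.
suff [du [dv e0]] : exists du dv : {ffun sub_lam lam -> 'F_n},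
    bform T (glue [ffun => 0] [ffun k => x k - x0 k]) (glue dv [ffun => 0])
    + bform T (glue du [ffun => 0]) (glue [ffun => 0] [ffun k => y k - y0 k]) != 0.
  exists (fun r : {ffun sub_lam lam -> 'F_n} * {ffun sub_lam lam -> 'F_n} =>
            ([ffun k => r.1 k + du k], [ffun k => r.2 k + dv k])); split.
    move=> [u v] [u' v'] /= [/ffunP hx /ffunP hy]; congr (_, _); apply/ffunP => k.
      by have := hx k; rewrite !ffunE => /addIr.
    by have := hy k; rewrite !ffunE => /addIr.
  eexists; split; first exact: e0.
  move=> [u v] /=.
  rewrite (@shift_eq _ _ T (glue u x) (glue u x0) (glue du [ffun => 0])
             (glue v y) (glue v y0) (glue dv [ffun => 0])); try by move=> k; rewrite glue_addl.
  congr (_ + (_ + _)); apply: bform_ext => k //; by rewrite glue_subr.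
have wPl : forall z : {ffun sub_lamc lam -> 'F_n}, forall i, i \notin ~: lam ->
    glue [ffun => 0] z i = 0.
  by move=> z i; rewrite inE negbK; apply: glue0l.
have [xx|nx] := eqVneq x x0.
  have ny : y != y0 by apply: contra ne => /eqP ->; rewrite xx.
  have [k yk] := ffun_neq ny.
  have wk : glue [ffun => 0] [ffun k => y k - y0 k] (val k) != 0 by rewrite glue_out ffunE.
  have [a [aQ nz]] := @cauchy_col _ _ T (~: lam) lam _ _ cT hl (wPl _) wk.
  exists [ffun k : sub_lam lam => ((val k == a)%:R : 'F_n)], [ffun => 0].
  rewrite bform0r; last by move=> i; apply: glue00.
  rewrite add0r (@bform_ext _ _ T _ (fun i => (i == a)%:R) _ (glue [ffun => 0] [ffun k => y k - y0 k])) //.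
    by rewrite bform_indl.
  by move=> i; rewrite glue_indl.
have [k xk] := ffun_neq nx.
have wk : glue [ffun => 0] [ffun k => x k - x0 k] (val k) != 0 by rewrite glue_out ffunE.
have [b [bQ nz]] := @cauchy_row _ _ T (~: lam) lam _ _ cT hl (wPl _) wk.
exists [ffun => 0], [ffun k : sub_lam lam => ((val k == b)%:R : 'F_n)].
rewrite [X in _ + X](bform0l T); last by move=> i; apply: glue00.
rewrite addr0 (@bform_ext _ _ T _ (glue [ffun => 0] [ffun k => x k - x0 k]) _ (fun i => (i == b)%:R)) //.
  by rewrite bform_indr.
by move=> i; rewrite glue_indl.
Qed.

Lemma card_pair_ffun n d (P : {set 'I_d}) : prime n ->
  #|{: ({ffun sub_lam P -> 'F_n} * {ffun sub_lam P -> 'F_n})%type}| = (n ^ (2 * #|P|))%N.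
Proof.
move=> pn; rewrite card_prod card_ffun card_Fp // card_sig.
rewrite (eq_card (B := P)) //; by rewrite -expnD addnn -mul2n.
Qed.

Theorem proposition6p10 (d n : nat) (T : 'M['F_n]_d) (lam : {set 'I_d}) :
  ~~ odd d -> prime n -> (2 * d < n)%N -> is_cauchy T ->
  frank (@W_flat n d T lam) = (n ^ (2 * minn #|lam| (d - #|lam|)))%N.
Proof.
move=> _ pn _ cT.
have hc : #|~: lam| = (d - #|lam|)%N by have := cardsC lam; rewrite card_ord; lia.
have [hl|hl] := boolP (#|lam| <= d - #|lam|)%N.
  rewrite (minn_idPl hl) case_rows //; first exact: card_pair_ffun.
  by rewrite hc.
rewrite -ltnNge in hl.
rewrite (minn_idPr (ltnW hl)) case_cols //; last by rewrite hc ltnW.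
by rewrite -hc; exact: card_pair_ffun.
Qed.
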